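(* Let $k_1,k_2$ be nonnegative integers with $k_1+k_2\ge1$, and let $0<x<1$. Then $$ {}_3F_2\!\left(\begin{matrix}1,\frac{k_1+k_2}{2}+1,\frac{k_1+k_2+1}{2}\\ k_1+1,k_2+1\end{matrix};x\right)=\frac{k_1!\,k_2!}{(k_1+k_2)!}\frac{2^{k_1+k_2}}{x^{k_2}}\frac{(1+\sqrt{1-x})^{k_2-k_1}}{\sqrt{1-x}}+\frac{k_2}{(k_1+k_2)\sqrt{1-x}}\left[{}_2F_1\!\left(\begin{matrix}1,k_1+k_2\\ k_1+1\end{matrix};\tfrac12-\tfrac12\sqrt{1-x}\right)-{}_2F_1\!\left(\begin{matrix}1,k_1+k_2\\ k_1+1\end{matrix};\tfrac12+\tfrac12\sqrt{1-x}\right)\right],$$ and $$ {}_3F_2\!\left(\begin{matrix}1,\frac{k_1+k_2}{2}+1,\frac{k_1+k_2+1}{2}\\ k_1+1,k_2+1\end{matrix};x\right)=\frac{1}{(k_1+k_2)\sqrt{1-x}}\left[k_2\,{}_2F_1\!\left(\begin{matrix}1,k_1+k_2\\ k_1+1\end{matrix};\tfrac12-\tfrac12\sqrt{1-x}\right)+k_1\,{}_2F_1\!\left(\begin{matrix}1,k_1+k_2\\ k_2+1\end{matrix};\tfrac12-\tfrac12\sqrt{1-x}\right)\right].$$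
   Context: For $|x|<1$, ${}_2F_1\!\left(\begin{matrix}a,b\\ d\end{matrix};x\right)=\sum_{n\ge0}\frac{(a)_n(b)_n}{(d)_n}\frac{x^n}{n!}$ and ${}_3F_2\!\left(\begin{matrix}a,b,c\\ d,e\end{matrix};x\right)=\sum_{n\ge0}\frac{(a)_n(b)_n(c)_n}{(d)_n(e)_n}\frac{x^n}{n!}$, with $(q)_0=1$, $(q)_n=q(q+1)\cdots(q+n-1)$. *)

(* Defs.v *)
From Stdlib Require Import Reals Factorial.
From Coquelicot Require Import Coquelicot.
Open Scope R_scope.

Fixpoint poch (q : R) (n : nat) : R :=
  match n with
  | O => 1
  | S m => poch q m * (q + INR m)
  end.

Definition F21 (a b d x : R) : R :=
  Series (fun n => poch a n * poch b n / poch d n * x ^ n / INR (fact n)).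

Definition F32 (a b c d e x : R) : R :=
  Series (fun n => poch a n * poch b n * poch c n / (poch d n * poch e n)
                   * x ^ n / INR (fact n)).

(* Main.v *)
Require Import Defs.
From Stdlib Require Import Reals Factorial Binomial Lia Lra.
From Coquelicot Require Import Coquelicot.
Open Scope R_scope.

Definition B (n k : nat) : R := if (k <=? n)%nat then Binomial.C n k else 0.

Lemma INR_fact_pos n : 0 < INR (fact n).
Proof. apply lt_0_INR, lt_O_fact. Qed.

Lemma B_fact n k : (k <= n)%nat ->
  B n k = INR (fact n) / (INR (fact k) * INR (fact (n - k))).
Proof. intros H; unfold B; rewrite (proj2 (Nat.leb_le _ _) H); reflexivity. Qed.

Lemma B_gt n k : (n < k)%nat -> B n k = 0.
Proof. intros H; unfold B; rewrite (proj2 (Nat.leb_gt _ _) H); reflexivity. Qed.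

Lemma B_n0 n : B n 0 = 1.
Proof. rewrite B_fact by lia. rewrite Nat.sub_0_r. simpl fact. rewrite Rmult_1_l.
  field. apply Rgt_not_eq, INR_fact_pos. Qed.

Lemma B_nn n : B n n = 1.
Proof. rewrite B_fact by lia. rewrite Nat.sub_diag. simpl fact. rewrite Rmult_1_r.
  field. apply Rgt_not_eq, INR_fact_pos. Qed.

Lemma B_pascal n k : B (S n) (S k) = B n k + B n (S k).
Proof.
  destruct (Compare_dec.lt_eq_lt_dec k n) as [[H|H]|H].
  - unfold B. rewrite (proj2 (Nat.leb_le (S k) (S n))) by lia.
    rewrite (proj2 (Nat.leb_le k n)) by lia.
    rewrite (proj2 (Nat.leb_le (S k) n)) by lia. symmetry; apply pascal; auto.
  - subst. rewrite B_nn, B_nn, (B_gt n (S n)) by lia. ring.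
  - rewrite !B_gt by lia. ring.
Qed.

Lemma B_sym n k : (k <= n)%nat -> B n k = B n (n - k).
Proof. intros H. rewrite !B_fact by lia. replace (n - (n - k))%nat with k by lia. rewrite (Rmult_comm (INR (fact k))); reflexivity. Qed.

Lemma B_bounds n k : 0 <= B n k <= 2 ^ n.
Proof.
  revert k; induction n; intros k.
  - destruct k. rewrite B_n0; simpl; lra. rewrite B_gt by lia; simpl; lra.
  - destruct k. rewrite B_n0. split. lra. pose proof (pow_le 2 (S n)). 
    assert (1 <= 2 ^ S n) by (apply pow_R1_Rle; lra). lra.
    rewrite B_pascal. specialize (IHn k) as H1. specialize (IHn (S k)) as H2. simpl. lra.
Qed.

Definition ca (n : nat) : R := B (2 * n) n.

Lemma ca_rec n : INR (S n) * ca (S n) = (4 * INR n + 2) * ca n.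
Proof.
  unfold ca. rewrite !B_fact by lia.
  replace (2 * S n - S n)%nat with (S n) by lia.
  replace (2 * n - n)%nat with n by lia.
  replace (2 * S n)%nat with (S (S (2 * n))) by lia.
  rewrite !fact_simpl, !mult_INR, !S_INR, mult_INR. simpl (INR 2).
  pose proof (INR_fact_pos n). pose proof (INR_fact_pos (2*n)). pose proof (pos_INR n).
  field. split; lra.
Qed.

Lemma ca_le n : 0 <= ca n <= 4 ^ n.
Proof. unfold ca. pose proof (B_bounds (2*n) n). rewrite pow_mult in H.
  replace (2^2) with 4 in H by ring. exact H. Qed.

Lemma ca_disk r : 0 <= r < 1/4 -> CV_disk ca r.
Proof.
  intros Hr. unfold CV_disk.
  apply (@ex_series_le R_AbsRing R_CompleteNormedModule _ (fun n => (4 * r) ^ n)).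
  - intros n. change (norm (Rabs (ca n * r ^ n))) with (Rabs (Rabs (ca n * r ^ n))).
    rewrite Rabs_Rabsolu, Rpow_mult_distr. pose proof (ca_le n).
    pose proof (pow_le r n (proj1 Hr)).
    rewrite Rabs_pos_eq by (apply Rmult_le_pos; lra).
    apply Rmult_le_compat_r; lra.
  - apply ex_series_geom. rewrite Rabs_pos_eq; lra.
Qed.

Lemma ca_radius w : Rabs w < 1/4 -> Rbar_lt (Rabs w) (CV_radius ca).
Proof.
  intros Hw. set (r := (Rabs w + 1/4)/2). pose proof (Rabs_pos w) as Hw0.
  assert (H := proj1 (Lub_Rbar_correct (CV_disk ca)) r (ca_disk r ltac:(unfold r; lra))).
  fold (CV_radius ca) in H.
  destruct (CV_radius ca) as [l| |]; simpl in *; try tauto. unfold r in H. lra.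
Qed.

Lemma ca_ode t : Rabs t < 1/4 ->
  (1 - 4 * t) * PSeries (PS_derive ca) t = 2 * PSeries ca t.
Proof.
  intros Ht. pose proof (ca_radius t Ht) as Hr.
  assert (Ed : ex_pseries (PS_derive ca) t) by (apply ex_pseries_derive; auto).
  rewrite Rmult_minus_distr_r, Rmult_1_l, Rmult_assoc, <- PSeries_incr_1.
  rewrite <- (PSeries_scal 4), <- PSeries_minus.
  2: exact Ed.
  2: { apply ex_pseries_scal. apply Rmult_comm. apply ex_pseries_incr_1; exact Ed. }
  rewrite <- (PSeries_scal 2). apply PSeries_ext. intros n.
  unfold PS_minus, PS_scal, PS_incr_1, PS_derive. 
  change (@plus R_NormedModule) with Rplus. change (@opp R_NormedModule) with Ropp.
  change (@scal R_AbsRing R_NormedModule) with Rmult.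
  destruct n.
  - pose proof (ca_rec 0). change (@zero R_NormedModule) with 0. simpl INR in *. lra.
  - pose proof (ca_rec (S n)). rewrite S_INR in *. lra.
Qed.

Lemma PSeries_ca_nonneg_ge1 w : 0 <= w < 1/4 -> 1 <= PSeries ca w.
Proof.
  intros Hw. assert (Hr := ca_radius w ltac:(rewrite Rabs_pos_eq; lra)).
  assert (E : ex_series (fun k => ca k * w ^ k)).
  { apply ex_series_Rabs. apply CV_disk_inside. exact Hr. }
  unfold PSeries. rewrite Series_incr_1 by exact E.
  assert (0 <= Series (fun k => ca (S k) * w ^ (S k))).
  { assert (Z : Series (fun _ : nat => 0) = 0).
    { rewrite (Series_ext (fun _ => 0) (fun n : nat => 0 * 1)) by (intros; ring).
      rewrite Series_scal_l; ring. }
    rewrite <- Z. apply Series_le. intros n. split. lra. apply Rmult_le_pos. apply ca_le. apply pow_le; lra.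
    apply (proj1 (ex_series_incr_1 (fun k => ca k * w ^ k))). exact E. }
  unfold ca at 1. rewrite Nat.mul_0_r, B_n0. rewrite pow_O. lra.
Qed.

Lemma T0_closed w : 0 <= w < 1/4 -> PSeries ca w = / sqrt (1 - 4 * w).
Proof.
  intros Hw.
  set (f := PSeries ca). set (g := fun t => (1 - 4 * t) * (f t * f t)).
  assert (Hd : forall c, Rabs (c - 0) <= w -> is_derive g c 0).
  { intros c Hc. rewrite Rminus_0_r in Hc.
    assert (Hc' : Rabs c < 1/4) by lra.
    pose proof (is_derive_PSeries ca c (ca_radius c Hc')) as Hf.
    pose proof (ca_ode c Hc') as Ho.
    assert (H1 : is_derive (fun t => 1 - 4 * t) c (-4)).
    { auto_derive; auto. ring. }
    pose proof (is_derive_mult _ _ _ _ _ Hf Hf ltac:(intros; apply Rmult_comm)) as H2.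
    pose proof (is_derive_mult _ _ _ _ _ H1 H2 ltac:(intros; apply Rmult_comm)) as H3.
    unfold g. fold f in Hf, Ho |- *.
    change (@mult R_AbsRing) with Rmult in H3. change (@plus R_AbsRing) with Rplus in H3.
    replace 0 with (-4 * (f c * f c) + (1 - 4 * c) * (PSeries (PS_derive ca) c * f c + f c * PSeries (PS_derive ca) c)).
    exact H3. 
    replace ((1 - 4 * c) * (PSeries (PS_derive ca) c * f c + f c * PSeries (PS_derive ca) c))
      with (2 * f c * ((1 - 4 * c) * PSeries (PS_derive ca) c)) by ring.
    rewrite Ho. ring. }
  destruct (MVT_cor4 g (fun _ => 0) 0 w Hd w ltac:(rewrite Rminus_0_r, Rabs_pos_eq; lra))
    as [c [Hc _]].
  assert (Hg : g w = 1).
  { replace (g w) with (g 0) by lra. unfold g, f. rewrite PSeries_0. unfold ca. rewrite Nat.mul_0_r, B_n0. ring. }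
  unfold g in Hg. pose proof (PSeries_ca_nonneg_ge1 w Hw). fold f in H.
  assert (Hs : 0 < sqrt (1 - 4 * w)) by (apply sqrt_lt_R0; lra).
  pose proof (sqrt_sqrt (1 - 4*w) ltac:(lra)) as Hss.
  assert (Hp : 0 < f w * sqrt (1 - 4 * w)) by (apply Rmult_lt_0_compat; lra).
  assert (Hq : (f w * sqrt (1 - 4 * w)) * (f w * sqrt (1 - 4 * w)) = 1).
  { replace ((f w * sqrt (1 - 4 * w)) * (f w * sqrt (1 - 4 * w))) with ((sqrt (1 - 4 * w) * sqrt (1 - 4 * w)) * (f w * f w)) by ring. rewrite Hss. exact Hg. }
  assert (f w * sqrt (1 - 4 * w) = 1) by nra.
  field_simplify_eq. lra. lra.
Qed.

Lemma ex_B j (kf : nat -> nat) w : 0 <= w < 1/4 ->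
  ex_series (fun n => B (j + 2 * n) (kf n) * w ^ n).
Proof.
  intros Hw.
  apply (@ex_series_le R_AbsRing R_CompleteNormedModule _ (fun n => 2 ^ j * (4 * w) ^ n)).
  - intros n. change (norm (B (j + 2 * n) (kf n) * w ^ n)) with (Rabs (B (j + 2 * n) (kf n) * w ^ n)).
    pose proof (B_bounds (j + 2 * n) (kf n)). rewrite pow_add, pow_mult in H.
    replace (2^2) with 4 in H by ring. rewrite Rpow_mult_distr.
    pose proof (pow_le w n (proj1 Hw)).
    rewrite Rabs_pos_eq by (apply Rmult_le_pos; lra).
    rewrite <- Rmult_assoc. apply Rmult_le_compat_r; lra.
  - apply (@ex_series_scal_l R_AbsRing R_CompleteNormedModule). apply ex_series_geom. rewrite Rabs_pos_eq; lra.
Qed.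

Definition Tj (j : nat) (w : R) := Series (fun n => B (j + 2 * n) n * w ^ n).

Lemma T0_eq w : 0 <= w < 1/4 -> Tj 0 w = / sqrt (1 - 4 * w).
Proof. intros Hw. rewrite <- T0_closed by auto. reflexivity. Qed.

Lemma T_rec0 w : 0 <= w < 1/4 -> Tj 0 w = 1 + 2 * w * Tj 1 w.
Proof.
  intros Hw. unfold Tj. rewrite Series_incr_1 by (apply ex_B; auto).
  rewrite Nat.mul_0_r, B_n0, pow_O, Rmult_1_l. f_equal.
  rewrite Rmult_assoc, <- Series_scal_l, <- Series_scal_l. apply Series_ext. intros n.
  replace (0 + 2 * S n)%nat with (S (1 + 2 * n)) by lia.
  rewrite B_pascal. rewrite (B_sym (1 + 2 * n) (S n)) by lia.
  replace (1 + 2 * n - S n)%nat with n by lia. simpl pow. ring.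
Qed.

Lemma T_rec j w : 0 <= w < 1/4 -> Tj (S j) w = Tj j w + w * Tj (S (S j)) w.
Proof.
  intros Hw. unfold Tj. rewrite (Series_incr_1 (fun n => B (S j + 2 * n) n * w ^ n)) by (apply ex_B; auto).
  rewrite (Series_incr_1 (fun n => B (j + 2 * n) n * w ^ n)) by (apply ex_B; auto).
  rewrite !Nat.mul_0_r, !B_n0, !pow_O.
  rewrite <- Series_scal_l.
  rewrite Rplus_assoc. f_equal. rewrite <- Series_plus.
  2: { apply (proj1 (ex_series_incr_1 (fun n => B (j + 2 * n) n * w ^ n))). apply ex_B; auto. }
  2: { apply (@ex_series_scal_l R_AbsRing R_CompleteNormedModule). apply ex_B; auto. }
  apply Series_ext. intros n.
  replace (S j + 2 * S n)%nat with (S (S (S j) + 2 * n)) by lia.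
  replace (j + 2 * S n)%nat with (S (S j) + 2 * n)%nat by lia.
  rewrite B_pascal. simpl pow. ring.
Qed.

Lemma T_closed z : 0 < z < 1/2 -> forall j,
  Tj j (z * (1 - z)) = / ((1 - z) ^ j * (1 - 2 * z)).
Proof.
  intros Hz.
  assert (Hw : 0 <= z * (1 - z) < 1/4) by nra.
  assert (Hs : sqrt (1 - 4 * (z * (1 - z))) = 1 - 2 * z).
  { replace (1 - 4 * (z * (1 - z))) with ((1 - 2 * z) ^ 2) by ring. apply sqrt_pow2. lra. }
  assert (H0 : Tj 0 (z * (1 - z)) = / (1 - 2 * z)) by (rewrite T0_eq, Hs; auto).
  assert (H1 : Tj 1 (z * (1 - z)) = / ((1 - z) * (1 - 2 * z))).
  { pose proof (T_rec0 _ Hw). rewrite H0 in H. apply (Rmult_eq_reg_l (2 * (z * (1 - z)))).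
    2: nra. replace (2 * (z * (1 - z)) * Tj 1 (z * (1 - z))) with (/ (1 - 2 * z) - 1) by lra. field. lra. }
  assert (forall j, Tj j (z * (1 - z)) = / ((1 - z) ^ j * (1 - 2 * z)) /\
                    Tj (S j) (z * (1 - z)) = / ((1 - z) ^ (S j) * (1 - 2 * z))).
  { induction j. split. rewrite H0. simpl. f_equal; ring. rewrite H1. simpl. f_equal; ring.
    destruct IHj as [A1 A2]. split. exact A2.
    pose proof (T_rec j _ Hw) as R. rewrite A1, A2 in R.
    assert (0 < (1 - z) ^ j) by (apply pow_lt; lra).
    apply (Rmult_eq_reg_l (z * (1 - z))). 2: nra.
    simpl pow in *. 
    assert (Tj (S (S j)) (z * (1 - z)) * (z * (1 - z)) = / ((1 - z) * ((1 - z) ^ j) * (1 - 2 * z)) - / ((1 - z) ^ j * (1 - 2 * z))) by lra.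
    rewrite Rmult_comm, H2. field. repeat split; nra. }
  intros j; apply H.
Qed.

Lemma hockey c m : sum_f_R0 (fun k => B (c + k) k) m = B (S c + m) m.
Proof.
  induction m.
  - simpl. rewrite !B_n0. reflexivity.
  - rewrite tech5, IHm.
    replace (S c + S m)%nat with (S (c + S m)) by lia.
    rewrite B_pascal. replace (c + S m)%nat with (S c + m)%nat by lia. ring.
Qed.

Lemma negbin c y : 0 <= y < 1 ->
  is_series (fun m => B (c + m) m * y ^ m) (/ ((1 - y) ^ (S c))).
Proof.
  intros Hy. induction c.
  - replace (/ ((1 - y) ^ 1)) with (/ (1 - y)) by (f_equal; ring).
    eapply is_series_ext. 2: apply is_series_geom; rewrite Rabs_pos_eq; lra.
    intros n. simpl. rewrite B_nn. ring.
  - assert (G := is_series_geom y ltac:(rewrite Rabs_pos_eq; lra)).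
    assert (E1 : ex_series (fun n => Rabs (B (c + n) n * y ^ n))).
    { eapply ex_series_ext. 2: eexists; exact IHc. intros n. symmetry; apply Rabs_pos_eq.
      apply Rmult_le_pos. apply B_bounds. apply pow_le; lra. }
    assert (E2 : ex_series (fun n => Rabs (y ^ n))).
    { eapply ex_series_ext. 2: eexists; exact G. intros n. symmetry; apply Rabs_pos_eq.
      apply pow_le; lra. }
    pose proof (is_series_mult _ _ _ _ IHc G E1 E2) as M.
    replace (/ ((1 - y) ^ S (S c))) with (/ ((1 - y) ^ S c) * / (1 - y)).
    2: { simpl. field. split. apply pow_nonzero. lra. lra. }
    eapply is_series_ext. 2: exact M. intros m. simpl.
    rewrite (sum_eq _ (fun k => B (c + k) k * y ^ m)).
    + rewrite <- scal_sum, hockey. replace (S c + m)%nat with (S (c + m)) by lia. ring.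
    + intros i Hi. rewrite Rmult_assoc, <- pow_add. f_equal. f_equal. lia.
Qed.

Lemma negbin_S c y : 0 <= y < 1 ->
  Series (fun m => B (c + m) m * y ^ m) = / ((1 - y) ^ (S c)).
Proof. intros; apply is_series_unique, negbin; auto. Qed.

Lemma negbin_ex c y : 0 <= y < 1 -> ex_series (fun m => B (c + m) m * y ^ m).
Proof. intros; eexists; apply negbin; auto. Qed.

Lemma ind2 (Pr : nat -> nat -> Prop) :
  (forall b, Pr 0%nat (S b)) -> (forall a, Pr (S a) 0%nat) ->
  (forall a b, Pr a (S b) -> Pr (S a) b -> Pr (S a) (S b)) ->
  forall a b, (1 <= a + b)%nat -> Pr a b.
Proof.
  intros H0 H1 H2.
  assert (forall N a b, (a + b)%nat = N -> (1 <= N)%nat -> Pr a b).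
  { induction N; intros a b E L. lia.
    destruct a, b. lia. apply H0. apply H1.
    apply H2; apply IHN; lia. }
  intros a b; apply (H (a + b)%nat); auto.
Qed.

Definition Pc a b m := B (a + b - 1 + m) (a + m).
Definition PS a b y := Series (fun m => Pc a b m * y ^ m).
Definition Dc a b n := B (a + b + 2 * n) (a + n).
Definition DS a b w := Series (fun n => Dc a b n * w ^ n).

Lemma Pc_rec a b m : Pc (S a) (S b) m = Pc a (S b) m + Pc (S a) b m.
Proof.
  unfold Pc. replace (S a + S b - 1 + m)%nat with (S (a + b + m)) by lia.
  replace (S a + m)%nat with (S (a + m)) by lia. rewrite B_pascal.
  f_equal; f_equal; lia.
Qed.

Lemma Pc_0 c m : Pc 0 (S c) m = B (c + m) m.
Proof. unfold Pc. f_equal. lia. Qed.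

Lemma Pc_a0 a m : Pc (S a) 0 m = 0.
Proof. unfold Pc. apply B_gt. lia. Qed.

Lemma PS_0 c y : 0 <= y < 1 -> PS 0 (S c) y = / ((1 - y) ^ (S c)).
Proof. intros Hy. unfold PS. rewrite <- (negbin_S c y Hy). apply Series_ext; intros; rewrite Pc_0; auto. Qed.

Lemma PS_a0 a y : PS (S a) 0 y = 0.
Proof. unfold PS. rewrite (Series_ext _ (fun n => 0 * 0)).
  rewrite Series_scal_l; ring. intros; rewrite Pc_a0; ring. Qed.

Lemma PS_ex y : 0 <= y < 1 -> forall a b, (1 <= a + b)%nat -> ex_series (fun m => Pc a b m * y ^ m).
Proof.
  intros Hy. apply ind2.
  - intros b. eapply ex_series_ext. 2: apply (negbin_ex b y Hy). intros; rewrite Pc_0; auto.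
  - intros a. eapply ex_series_ext. 2: apply (@ex_series_scal_l R_AbsRing R_CompleteNormedModule 0 (fun n => y ^ n)); apply ex_series_geom; rewrite Rabs_pos_eq; lra.
    intros n. rewrite Pc_a0, Rmult_0_l. symmetry. exact (Rmult_0_l _).
  - intros a b H1 H2. eapply ex_series_ext. 2: apply (ex_series_plus _ _ H1 H2).
    intros n. rewrite Pc_rec, Rmult_plus_distr_r. reflexivity.
Qed.

Lemma PS_rec y a b : 0 <= y < 1 ->
  PS (S a) (S b) y = PS a (S b) y + PS (S a) b y.
Proof.
  intros Hy. unfold PS. rewrite <- Series_plus by (apply PS_ex; auto; lia).
  apply Series_ext; intros; rewrite Pc_rec; ring.
Qed.

Lemma PS_rec' y a b : 0 <= y < 1 ->
  PS (S a) (S b) y = PS a (S b) y + PS (S a) b y.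
Proof. intros; apply PS_rec; auto. Qed.

Lemma Qid z : 0 < z < 1 -> forall a b, (1 <= a + b)%nat ->
  PS a b (1 - z) + PS b a z = / (z ^ b * (1 - z) ^ a).
Proof.
  intros Hz. apply ind2.
  - intros b. rewrite PS_0 by lra. rewrite PS_a0. replace (1 - (1 - z)) with z by ring.
    simpl pow at 3. rewrite Rmult_1_r. ring.
  - intros a. rewrite PS_0 by lra. rewrite PS_a0. simpl pow at 2. rewrite Rmult_1_l. ring.
  - intros a b H1 H2. rewrite (PS_rec' (1 - z)) by lra. rewrite (PS_rec' z) by lra.
    replace (PS a (S b) (1 - z) + PS (S a) b (1 - z) + (PS b (S a) z + PS (S b) a z))
      with ((PS a (S b) (1 - z) + PS (S b) a z) + (PS (S a) b (1 - z) + PS b (S a) z)) by ring.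
    rewrite H1, H2. simpl pow.
    assert (0 < z ^ b) by (apply pow_lt; lra). assert (0 < (1 - z) ^ a) by (apply pow_lt; lra).
    field. repeat split; nra.
Qed.

Lemma Dc_rec a b n : Dc (S a) (S b) n = Dc a (S b) n + Dc (S a) b n.
Proof.
  unfold Dc. replace (S a + S b + 2 * n)%nat with (S (a + S b + 2 * n)) by lia.
  replace (S a + n)%nat with (S (a + n)) by lia. rewrite B_pascal.
  f_equal; f_equal; lia.
Qed.

Lemma Dc_sym a b n : Dc a b n = Dc b a n.
Proof. unfold Dc. rewrite B_sym by lia. f_equal; lia. Qed.

Lemma DS_ex a b w : 0 <= w < 1/4 -> ex_series (fun n => Dc a b n * w ^ n).
Proof. intros Hw. apply (ex_B (a + b) (fun n => a + n)%nat w Hw). Qed.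

Lemma DS_0 b w : DS 0 b w = Tj b w.
Proof. reflexivity. Qed.

Lemma Id2 z : 0 < z < 1/2 -> forall a b, (1 <= a + b)%nat ->
  (1 - 2 * z) * DS a b (z * (1 - z)) = PS a b z + PS b a z.
Proof.
  intros Hz.
  assert (Hw : 0 <= z * (1 - z) < 1/4) by nra.
  apply ind2.
  - intros b. rewrite DS_0, T_closed by auto. rewrite PS_0 by lra. rewrite PS_a0.
    field. split. apply pow_nonzero. lra. lra.
  - intros a. unfold DS. rewrite (Series_ext _ (fun n => Dc 0 (S a) n * (z * (1 - z)) ^ n))
      by (intros; rewrite Dc_sym; auto).
    fold (DS 0 (S a) (z * (1 - z))). rewrite DS_0, T_closed by auto. rewrite PS_0 by lra. rewrite PS_a0.
    field. split. apply pow_nonzero. lra. lra.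
  - intros a b H1 H2. unfold DS.
    rewrite (Series_ext _ (fun n => Dc a (S b) n * (z * (1 - z)) ^ n + Dc (S a) b n * (z * (1 - z)) ^ n))
      by (intros; rewrite Dc_rec; ring).
    rewrite Series_plus by (apply DS_ex; auto).
    fold (DS a (S b) (z * (1 - z))). fold (DS (S a) b (z * (1 - z))).
    rewrite Rmult_plus_distr_l, H1, H2.
    rewrite (PS_rec' z) by lra. rewrite (PS_rec' z) by lra. ring.
Qed.

Lemma fact_nz n : INR (fact n) <> 0.
Proof. apply Rgt_not_eq, INR_fact_pos. Qed.

Lemma poch_1 n : poch 1 n = INR (fact n).
Proof. induction n. reflexivity. simpl poch. rewrite IHn, fact_simpl, mult_INR, S_INR. ring. Qed.

Lemma poch_k k n : poch (INR k + 1) n = INR (fact (k + n)) / INR (fact k).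
Proof.
  induction n. rewrite Nat.add_0_r. simpl. field. apply fact_nz.
  simpl poch. rewrite IHn. replace (k + S n)%nat with (S (k + n)) by lia.
  rewrite fact_simpl, mult_INR, S_INR, plus_INR. field. apply fact_nz.
Qed.

Lemma poch_half K n : poch (INR K / 2 + 1) n * poch ((INR K + 1) / 2) n
  = INR (fact (K + 2 * n)) / (INR (fact K) * 4 ^ n).
Proof.
  induction n. rewrite Nat.add_0_r. simpl. field. apply fact_nz.
  simpl poch. replace (poch (INR K / 2 + 1) n * (INR K / 2 + 1 + INR n) *
     (poch ((INR K + 1) / 2) n * ((INR K + 1) / 2 + INR n))) with
    ((poch (INR K / 2 + 1) n * poch ((INR K + 1) / 2) n) * ((INR K / 2 + 1 + INR n) * ((INR K + 1) / 2 + INR n))) by ring.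
  rewrite IHn. replace (K + 2 * S n)%nat with (S (S (K + 2 * n))) by lia.
  rewrite !fact_simpl, !mult_INR, !S_INR, plus_INR, mult_INR. simpl (INR 2).
  change (4 ^ S n) with (4 * 4 ^ n). field. split. apply pow_nonzero; lra. apply fact_nz.
Qed.

Lemma term32 k1 k2 x n :
  let K := INR (k1 + k2) in
  poch 1 n * poch (K / 2 + 1) n * poch ((K + 1) / 2) n
    / (poch (INR k1 + 1) n * poch (INR k2 + 1) n) * x ^ n / INR (fact n)
  = Dc k1 k2 n / B (k1 + k2) k1 * (x / 4) ^ n.
Proof.
  intros K. unfold K. rewrite Rmult_assoc with (r1 := poch 1 n), poch_half, poch_1, !poch_k.
  unfold Dc. rewrite !B_fact by lia.
  replace (k1 + k2 + 2 * n - (k1 + n))%nat with (k2 + n)%nat by lia.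
  replace (k1 + k2 - k1)%nat with k2 by lia.
  unfold Rdiv at 9. rewrite Rpow_mult_distr, pow_inv.
  pose proof (fact_nz n). pose proof (fact_nz k1). pose proof (fact_nz k2).
  pose proof (fact_nz (k1 + n)). pose proof (fact_nz (k2 + n)). pose proof (fact_nz (k1 + k2)).
  pose proof (fact_nz (k1 + k2 + 2 * n)).
  field. repeat split; auto. apply pow_nonzero; lra.
Qed.

Lemma term21 k1 k2 y m : (1 <= k1 + k2)%nat ->
  INR k2 * (poch 1 m * poch (INR (k1 + k2)) m / poch (INR k1 + 1) m * y ^ m / INR (fact m))
  = INR (k1 + k2) * (Pc k1 k2 m / B (k1 + k2) k1 * y ^ m).
Proof.
  intros H. destruct k2 as [|k2'].
  - unfold Pc. rewrite (B_gt _ (k1 + m)) by lia. simpl INR. unfold Rdiv. ring.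
  - rewrite poch_1, poch_k.
    replace (INR (k1 + S k2')) with (INR (k1 + k2') + 1) by (rewrite <- S_INR; f_equal; lia).
    rewrite poch_k. unfold Pc. rewrite !B_fact by lia.
    replace (k1 + S k2' - 1 + m - (k1 + m))%nat with k2' by lia.
    replace (k1 + S k2' - 1 + m)%nat with (k1 + k2' + m)%nat by lia.
    replace (k1 + S k2' - k1)%nat with (S k2') by lia.
    replace (k1 + S k2')%nat with (S (k1 + k2')) by lia.
    rewrite !fact_simpl, !mult_INR, !S_INR, plus_INR.
    pose proof (fact_nz m). pose proof (fact_nz k1). pose proof (fact_nz k2').
    pose proof (fact_nz (k1 + m)). pose proof (fact_nz (k1 + k2')).
    pose proof (fact_nz (k1 + k2' + m)). pose proof (pos_INR k1). pose proof (pos_INR k2').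
    field. repeat split; auto; lra.
Qed.

Lemma F21_PS k1 k2 y : (1 <= k1 + k2)%nat ->
  INR k2 * F21 1 (INR (k1 + k2)) (INR k1 + 1) y
  = INR (k1 + k2) * PS k1 k2 y / B (k1 + k2) k1.
Proof.
  intros H. unfold F21. rewrite <- Series_scal_l.
  rewrite (Series_ext _ (fun m => INR (k1 + k2) / B (k1 + k2) k1 * (Pc k1 k2 m * y ^ m))).
  rewrite Series_scal_l. unfold PS, Rdiv. ring.
  intros m. rewrite term21 by auto. unfold Rdiv. ring.
Qed.

Lemma F32_DS k1 k2 x :
  let K := INR (k1 + k2) in
  F32 1 (K / 2 + 1) ((K + 1) / 2) (INR k1 + 1) (INR k2 + 1) x
  = DS k1 k2 (x / 4) / B (k1 + k2) k1.
Proof.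
  intros K. unfold F32. rewrite (Series_ext _ (fun n => / B (k1 + k2) k1 * (Dc k1 k2 n * (x / 4) ^ n))).
  rewrite Series_scal_l. unfold DS, Rdiv. ring.
  intros n. unfold K. rewrite term32. unfold Rdiv. ring.
Qed.

Lemma powZ_diff (u : R) (a b : nat) : u <> 0 ->
  powerRZ u (Z.of_nat b - Z.of_nat a) = u ^ b / u ^ a.
Proof.
  intros Hu. unfold Z.sub. rewrite powerRZ_add by auto.
  rewrite powerRZ_neg', <- !pow_powerRZ. reflexivity.
Qed.

Theorem theorem2 (k1 k2 : nat) (x : R) :
  (1 <= k1 + k2)%nat -> 0 < x < 1 ->
  let K := INR (k1 + k2) in
  let s := sqrt (1 - x) in
  let LHS := F32 1 (K / 2 + 1) ((K + 1) / 2) (INR k1 + 1) (INR k2 + 1) x in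
  LHS =
    INR (fact k1) * INR (fact k2) / INR (fact (k1 + k2))
      * (2 ^ (k1 + k2) / x ^ k2)
      * (powerRZ (1 + s) (Z.of_nat k2 - Z.of_nat k1) / s)
    + INR k2 / (K * s)
      * (F21 1 K (INR k1 + 1) (1/2 - 1/2 * s)
         - F21 1 K (INR k1 + 1) (1/2 + 1/2 * s))
  /\
  LHS =
    1 / (K * s)
      * (INR k2 * F21 1 K (INR k1 + 1) (1/2 - 1/2 * s)
         + INR k1 * F21 1 K (INR k2 + 1) (1/2 - 1/2 * s)).
Proof.
  intros HK Hx K s LHS.
  assert (Hs0 : 0 < s) by (apply sqrt_lt_R0; lra).
  assert (Hss : s * s = 1 - x) by (apply sqrt_sqrt; lra).
  assert (Hs1 : s < 1) by nra.
  set (z := (1 - s) / 2).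
  assert (Hz : 0 < z < 1/2) by (unfold z; lra).
  assert (Hw : x / 4 = z * (1 - z)) by (unfold z; nra).
  assert (E1 : 1/2 - 1/2 * s = z) by (unfold z; lra).
  assert (E2 : 1/2 + 1/2 * s = 1 - z) by (unfold z; lra).
  assert (Es : s = 1 - 2 * z) by (unfold z; lra).
  assert (HKp : 0 < K) by (unfold K; apply lt_0_INR; lia).
  set (Bk := B (k1 + k2) k1).
  assert (HB : Bk = INR (fact (k1 + k2)) / (INR (fact k1) * INR (fact k2))).
  { unfold Bk. rewrite B_fact by lia. replace (k1 + k2 - k1)%nat with k2 by lia. reflexivity. }
  assert (HBp : 0 < Bk).
  { rewrite HB. pose proof (INR_fact_pos (k1+k2)). pose proof (INR_fact_pos k1). pose proof (INR_fact_pos k2).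
    apply Rdiv_lt_0_compat; auto. apply Rmult_lt_0_compat; auto. }
  assert (HL : LHS = DS k1 k2 (z * (1 - z)) / Bk).
  { unfold LHS, K. rewrite F32_DS, Hw. reflexivity. }
  assert (HI2 := Id2 z Hz k1 k2 HK).
  assert (HF1 : forall y, INR k2 * F21 1 K (INR k1 + 1) y = K * PS k1 k2 y / Bk).
  { intros y. unfold K, Bk. apply F21_PS; auto. }
  assert (HF2 : forall y, INR k1 * F21 1 K (INR k2 + 1) y = K * PS k2 k1 y / Bk).
  { intros y. unfold K, Bk. rewrite (Nat.add_comm k1 k2). rewrite F21_PS by lia.
    rewrite (B_sym (k2 + k1) k2) by lia. do 3 f_equal; lia. }
  assert (Id2' : LHS = (PS k1 k2 z + PS k2 k1 z) / (s * Bk)).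
  { rewrite HL, <- HI2, <- Es. field. lra. }
  split.
  - assert (HQ := Qid z ltac:(lra) k1 k2 HK).
    rewrite E1, E2.
    replace (INR k2 / (K * s) * (F21 1 K (INR k1 + 1) z - F21 1 K (INR k1 + 1) (1 - z)))
      with (/ (K * s) * (INR k2 * F21 1 K (INR k1 + 1) z - INR k2 * F21 1 K (INR k1 + 1) (1 - z)))
      by (unfold Rdiv; ring).
    rewrite !HF1.
    assert (HE : INR (fact k1) * INR (fact k2) / INR (fact (k1 + k2)) * (2 ^ (k1 + k2) / x ^ k2) *
       (powerRZ (1 + s) (Z.of_nat k2 - Z.of_nat k1) / s) = / (z ^ k2 * (1 - z) ^ k1) / (s * Bk)).
    { rewrite powZ_diff by lra. rewrite HB.
      replace (1 + s) with (2 * (1 - z)) by (unfold z; lra).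
      replace x with (4 * (z * (1 - z))) by lra.
      rewrite !Rpow_mult_distr, pow_add.
      replace 4 with (2 * 2) by ring. rewrite Rpow_mult_distr.
      pose proof (fact_nz k1). pose proof (fact_nz k2). pose proof (fact_nz (k1 + k2)).
      assert (0 < z ^ k2) by (apply pow_lt; lra).
      assert (0 < (1 - z) ^ k1) by (apply pow_lt; lra).
      assert (0 < (1 - z) ^ k2) by (apply pow_lt; lra).
      assert (0 < 2 ^ k1) by (apply pow_lt; lra).
      assert (0 < 2 ^ k2) by (apply pow_lt; lra).
      field. repeat split; lra. }
    rewrite HE, Id2'.
    replace (PS k1 k2 (1 - z)) with (/ (z ^ k2 * (1 - z) ^ k1) - PS k2 k1 z) by lra.
    assert (0 < z ^ k2) by (apply pow_lt; lra). assert (0 < (1 - z) ^ k1) by (apply pow_lt; lra). field. repeat split; lra.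
  - rewrite E1, HF1, HF2, Id2'. field. repeat split; lra.
Qed.
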